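(* Let $\tilde F:\mathbb{R}\to\mathbb{R}$ be continuous in a neighborhood of $x_0\in\mathbb{R}$ and point-Lipschitz at $x_0$. Then the differential equation $\dot x=\tilde F(x)$ with initial condition $x(0)=x_0$ has a unique solution.
   Context: $\tilde F$ is point-Lipschitz at $x_0$ if there exist a neighborhood $\mathcal{U}$ of $x_0$ and $L\ge 0$ such that $|\tilde F(x)-\tilde F(x_0)|\le L|x-x_0|$ for all $x\in\mathcal{U}$. *)

(* Defs.v *)
From Stdlib Require Import Reals Lra.
Open Scope R_scope.

Definition point_Lipschitz (F : R -> R) (x0 : R) : Prop :=
  exists delta : R, 0 < delta /\
  exists L : R, 0 <= L /\
  forall x : R, Rabs (x - x0) < delta -> Rabs (F x - F x0) <= L * Rabs (x - x0).

Definition continuous_near (F : R -> R) (x0 : R) : Prop :=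
  exists r : R, 0 < r /\ forall x : R, Rabs (x - x0) < r -> continuity_pt F x.

Definition ivp_solution (F : R -> R) (x0 a b : R) (x : R -> R) : Prop :=
  a < 0 < b /\ x 0 = x0 /\
  forall t : R, a < t < b -> derivable_pt_lim x t (F (x t)).

(* Main.v *)
Require Import Defs.
From Stdlib Require Import Reals Lra Ranalysis5 Classical.
From Coquelicot Require Import Coquelicot.
Open Scope R_scope.

Lemma rev_deriv (y : R -> R) t l :
  derivable_pt_lim y (- t) l -> derivable_pt_lim (fun s => y (- s)) t (- l).
Proof.
  intro H.
  assert (H1 : derivable_pt_lim Ropp t (-1)).
  { replace (-1) with (- 1) by ring. apply derivable_pt_lim_opp, derivable_pt_lim_id. }
  pose proof (derivable_pt_lim_comp Ropp y t (-1) l H1 H) as H2.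
  replace (- l) with (l * -1) by ring. exact H2.
Qed.

Lemma deriv_cont (y : R -> R) t l : derivable_pt_lim y t l -> continuity_pt y t.
Proof.
  intro H. apply derivable_continuous_pt. exists l. exact H.
Qed.

Lemma stay_pos (y y' : R -> R) x0 d rho M :
  0 <= M -> M * d < rho -> y 0 = x0 ->
  (forall t, - d < t < d -> derivable_pt_lim y t (y' t)) ->
  (forall t, - d < t < d -> Rabs (y t - x0) < rho -> Rabs (y' t) <= M) ->
  forall t1, 0 <= t1 < d -> Rabs (y t1 - x0) < rho.
Proof.
  intros HM HMd Hy0 Hd Hb t1 Ht1.
  assert (Hrho : 0 < rho) by nra.
  set (E := fun s => 0 <= s <= t1 /\ forall u, 0 <= u <= s -> Rabs (y u - x0) < rho).
  assert (HE0 : E 0).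
  { split; [lra|]. intros u Hu. replace u with 0 by lra. rewrite Hy0.
    replace (x0 - x0) with 0 by ring. rewrite Rabs_R0. exact Hrho. }
  destruct (completeness E) as [s Hs].
  { exists t1. intros z [Hz _]. lra. }
  { exists 0. exact HE0. }
  destruct Hs as [Hub Hlub].
  assert (Hs0 : 0 <= s) by (apply Hub; exact HE0).
  assert (Hst : s <= t1).
  { apply Hlub. intros z [Hz _]. lra. }
  assert (HA : forall u, 0 <= u < s -> Rabs (y u - x0) < rho).
  { intros u Hu.
    destruct (classic (exists z, E z /\ u < z)) as [[z [[_ Hz] Huz]]|Hn].
    - apply Hz. lra.
    - exfalso. assert (s <= u). { apply Hlub. intros z Hz.
        destruct (Rle_dec z u) as [|Hzu]; [auto|]. exfalso; apply Hn; exists z; split; [auto|lra]. }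
      lra. }
  assert (HB : Rabs (y s - x0) <= M * s).
  { destruct (Req_dec s 0) as [Hs|Hs].
    - rewrite Hs, Hy0. replace (x0 - x0) with 0 by ring. rewrite Rabs_R0. lra.
    - destruct (MVT_cor2 y y' 0 s) as [c [Hc1 Hc2]]; [lra| |].
      + intros c Hc. apply Hd. lra.
      + rewrite Hy0 in Hc1. rewrite Hc1, Rabs_mult, (Rabs_right (s - 0)) by lra.
        assert (Rabs (y' c) <= M). { apply Hb. lra. apply HA. lra. }
        assert (0 <= Rabs (y' c)) by apply Rabs_pos. nra. }
  assert (HBs : Rabs (y s - x0) < rho) by nra.
  destruct (Req_dec s t1) as [<-|Hne]; [exact HBs|].
  exfalso.
  assert (Hc : continuity_pt y s) by (apply (deriv_cont y s (y' s)); apply Hd; lra).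
  unfold continuity_pt, continue_in, limit1_in, limit_in in Hc. simpl in Hc.
  destruct (Hc (rho - Rabs (y s - x0))) as [al [Hal Hal2]]; [lra|].
  set (s' := Rmin t1 (s + al / 2)).
  assert (Hs' : s < s') by (unfold s', Rmin; destruct (Rle_dec t1 (s + al/2)); lra).
  assert (E s').
  { split. { unfold s', Rmin; destruct (Rle_dec t1 (s + al/2)); lra. }
    intros u Hu. destruct (Rlt_dec u s) as [Hus|Hus]. { apply HA; lra. }
    destruct (Req_dec u s) as [->|Hus2]; [exact HBs|].
    assert (Hd2 : R_dist (y u) (y s) < rho - Rabs (y s - x0)).
    { apply Hal2. split. { split; [exact I|]. intro; apply Hus2; auto. }
      unfold R_dist. rewrite Rabs_right by lra.
      assert (s' <= s + al/2) by apply Rmin_r. lra. }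
    unfold R_dist in Hd2.
    replace (y u - x0) with ((y u - y s) + (y s - x0)) by ring.
    eapply Rle_lt_trans; [apply Rabs_triang|]. lra. }
  assert (s' <= s) by (apply Hub; auto). lra.
Qed.

Lemma stay (y y' : R -> R) x0 d rho M :
  0 <= M -> M * d < rho -> y 0 = x0 ->
  (forall t, - d < t < d -> derivable_pt_lim y t (y' t)) ->
  (forall t, - d < t < d -> Rabs (y t - x0) < rho -> Rabs (y' t) <= M) ->
  forall t1, - d < t1 < d -> Rabs (y t1 - x0) < rho.
Proof.
  intros HM HMd Hy0 Hd Hb t1 Ht1.
  destruct (Rle_dec 0 t1).
  - apply (stay_pos y y' x0 d rho M); auto; lra.
  - replace t1 with (- (- t1)) by ring.
    apply (stay_pos (fun s => y (- s)) (fun s => - y' (- s)) x0 d rho M); auto.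
    + rewrite Ropp_0; auto.
    + intros t Ht. apply rev_deriv. apply Hd. lra.
    + intros t Ht H. rewrite Rabs_Ropp. apply Hb; auto. lra.
    + lra.
Qed.

Lemma const_deriv (h : R -> R) d :
  (forall t, - d < t < d -> derivable_pt_lim h t 0) ->
  forall t, - d < t < d -> h t = h 0.
Proof.
  intros Hd t Ht.
  destruct (Rtotal_order t 0) as [H|[H|H]].
  - destruct (MVT_cor2 h (fun _ => 0) t 0) as [c [Hc _]]; auto.
    intros c Hc; apply Hd; lra. lra.
  - subst; auto.
  - destruct (MVT_cor2 h (fun _ => 0) 0 t) as [c [Hc _]]; auto.
    intros c Hc; apply Hd; lra. lra.
Qed.

Lemma case_zero F x0 : point_Lipschitz F x0 -> F x0 = 0 ->
  exists eps : R, 0 < eps /\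
  exists x : R -> R, ivp_solution F x0 (- eps) eps x /\
  forall (d : R) (y : R -> R), 0 < d <= eps -> ivp_solution F x0 (- d) d y ->
    forall t : R, - d < t < d -> y t = x t.
Proof.
  intros [delta [Hdel [L [HL HLip]]]] HF0.
  exists (/ (2 * (L + 1))). split. { apply Rinv_0_lt_compat; lra. }
  exists (fun _ => x0). split.
  - split; [|split]; auto.
    + assert (0 < / (2 * (L + 1))) by (apply Rinv_0_lt_compat; lra). lra.
    + intros t _. rewrite HF0. apply derivable_pt_lim_const.
  - intros d y Hd [_ [Hy0 Hyd]] t Ht.
    assert (HLd : L * d < 1).
    { assert (L * / (2 * (L + 1)) < 1).
      { apply (Rmult_lt_reg_r (2 * (L + 1))); [lra|].
        rewrite Rmult_assoc, Rinv_l by lra. lra. }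
      nra. }
    destruct (Req_dec (y t) x0) as [|Hne]; auto. exfalso.
    assert (Hpos : 0 < Rabs (y t - x0)) by (apply Rabs_pos_lt; lra).
    set (rho := Rmin delta (Rabs (y t - x0))).
    assert (Hr1 : rho <= delta) by apply Rmin_l.
    assert (Hr2 : rho <= Rabs (y t - x0)) by apply Rmin_r.
    assert (Hr0 : 0 < rho) by (unfold rho, Rmin; destruct (Rle_dec delta (Rabs (y t - x0))); lra).
    assert (Rabs (y t - x0) < rho).
    { apply (stay y (fun s => F (y s)) x0 d rho (L * rho)); auto.
      - nra.
      - nra.
      - intros s Hs Hys. replace (F (y s)) with (F (y s) - F x0) by (rewrite HF0; ring).
        eapply Rle_trans; [apply HLip; lra|]. nra. }
    lra.
Qed.

Lemma case_pos F x0 : continuous_near F x0 -> 0 < F x0 ->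
  exists eps : R, 0 < eps /\
  exists x : R -> R, ivp_solution F x0 (- eps) eps x /\
  forall (d : R) (y : R -> R), 0 < d <= eps -> ivp_solution F x0 (- d) d y ->
    forall t : R, - d < t < d -> y t = x t.
Proof.
  intros [r0 [Hr0 Hcont]] HF0.
  set (F0 := F x0) in *.
  assert (Hc0 := Hcont x0 ltac:(replace (x0 - x0) with 0 by ring; rewrite Rabs_R0; lra)).
  unfold continuity_pt, continue_in, limit1_in, limit_in in Hc0. simpl in Hc0.
  destruct (Hc0 (F0 / 2)) as [al [Hal Hal2]]; [lra|].
  set (r := Rmin r0 al).
  assert (Hr : 0 < r) by (unfold r, Rmin; destruct (Rle_dec r0 al); lra).
  assert (Hrr0 : r <= r0) by apply Rmin_l.
  assert (Hral : r <= al) by apply Rmin_r.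
  assert (HFb : forall x, Rabs (x - x0) < r -> F0 / 2 < F x < 3 * F0 / 2).
  { intros x Hx. destruct (Req_dec x x0) as [->|Hne]. { fold F0; lra. }
    assert (H : R_dist (F x) F0 < F0 / 2).
    { apply Hal2. split. split; [exact I|auto]. unfold R_dist; lra. }
    unfold R_dist in H. apply Rabs_def2 in H. lra. }
  assert (HFc : forall x, Rabs (x - x0) < r -> continuity_pt F x).
  { intros x Hx; apply Hcont; lra. }
  assert (Hconv : forall a b c, Rabs (a - x0) < r -> Rabs (b - x0) < r -> a <= c <= b -> Rabs (c - x0) < r).
  { intros a b c Ha Hb Hc. apply Rabs_def2 in Ha. apply Rabs_def2 in Hb. apply Rabs_def1; lra. }
  set (G := fun x => RInt (fun s => / F s) x0 x).
  assert (HG : forall x, Rabs (x - x0) < r -> derivable_pt_lim G x (/ F x)).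
  { intros x Hx. apply is_derive_Reals.
    apply (is_derive_RInt (fun s => / F s) G x0 x).
    - assert (Hpos : 0 < r - Rabs (x - x0)) by lra.
      exists (mkposreal _ Hpos). intros b Hb. simpl in Hb.
      change (Rabs (b - x) < r - Rabs (x - x0)) in Hb.
      apply (RInt_correct (fun s => / F s)).
      apply ex_RInt_continuous. intros z Hz.
      assert (Hzr : Rabs (z - x0) < r).
      { apply Rabs_def2 in Hb.
        pose proof (Rle_abs (x - x0)). pose proof (Rle_abs (- (x - x0))).
        rewrite Rabs_Ropp in *. apply Rabs_def1.
        - destruct (Rle_dec x0 b).
          + rewrite Rmax_right in Hz by lra. lra.
          + rewrite Rmax_left in Hz by lra. lra.
        - destruct (Rle_dec x0 b).
          + rewrite Rmin_left in Hz by lra. lra.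
          + rewrite Rmin_right in Hz by lra. lra. }
      apply continuity_pt_filterlim. apply continuity_pt_inv.
      + apply HFc; auto.
      + specialize (HFb z Hzr). lra.
    - apply continuity_pt_filterlim. apply continuity_pt_inv. apply HFc; auto.
      specialize (HFb x Hx). lra. }
    assert (Hball0 : Rabs (x0 - x0) < r) by (replace (x0 - x0) with 0 by ring; rewrite Rabs_R0; lra).
  assert (Ginc : forall a b, Rabs (a - x0) < r -> Rabs (b - x0) < r -> a < b -> G a < G b).
  { intros a b Ha Hb Hab.
    destruct (MVT_cor2 G (fun c => / F c) a b) as [c [Hc1 Hc2]]; auto.
    - intros c Hc. apply HG. apply (Hconv a b); auto.
    - assert (Rabs (c - x0) < r) by (apply (Hconv a b); auto; lra).
      specialize (HFb c H). assert (0 < / F c) by (apply Rinv_0_lt_compat; lra). nra. }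
  assert (Ginj : forall a b, Rabs (a - x0) < r -> Rabs (b - x0) < r -> G a = G b -> a = b).
  { intros a b Ha Hb Hab. destruct (Rtotal_order a b) as [H|[H|H]]; auto.
    - specialize (Ginc a b Ha Hb H). lra.
    - specialize (Ginc b a Hb Ha H). lra. }
  assert (HG0 : G x0 = 0) by (unfold G; rewrite RInt_point; reflexivity).
  set (lb := x0 - r / 2). set (ub := x0 + r / 2).
  assert (Hlb : Rabs (lb - x0) < r) by (unfold lb; apply Rabs_def1; lra).
  assert (Hub : Rabs (ub - x0) < r) by (unfold ub; apply Rabs_def1; lra).
  set (eps := r / (3 * F0)).
  assert (Heps : 0 < eps) by (unfold eps; apply Rdiv_lt_0_compat; lra).
  assert (HGub : eps < G ub).
  { destruct (MVT_cor2 G (fun c => / F c) x0 ub) as [c [Hc1 Hc2]]; [unfold ub; lra| |].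
    - intros c Hc. apply HG. apply (Hconv x0 ub); auto.
    - assert (Hcb : Rabs (c - x0) < r) by (apply (Hconv x0 ub); auto; lra).
      specialize (HFb c Hcb). rewrite HG0 in Hc1.
      assert (/ (3 * F0 / 2) < / F c) by (apply Rinv_lt_contravar; nra).
      unfold eps, ub in *. replace (x0 + r / 2 - x0) with (r / 2) in Hc1 by ring.
      replace (r / (3 * F0)) with (/ (3 * F0 / 2) * (r / 2)) by (field; lra). nra. }
  assert (HGlb : G lb < - eps).
  { destruct (MVT_cor2 G (fun c => / F c) lb x0) as [c [Hc1 Hc2]]; [unfold lb; lra| |].
    - intros c Hc. apply HG. apply (Hconv lb x0); auto.
    - assert (Hcb : Rabs (c - x0) < r) by (apply (Hconv lb x0); auto; lra).
      specialize (HFb c Hcb). rewrite HG0 in Hc1.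
      assert (/ (3 * F0 / 2) < / F c) by (apply Rinv_lt_contravar; nra).
      unfold eps, lb in *. replace (x0 - (x0 - r / 2)) with (r / 2) in Hc1 by ring.
      replace (r / (3 * F0)) with (/ (3 * F0 / 2) * (r / 2)) by (field; lra). nra. }
  assert (Hlbub : lb < ub) by (unfold lb, ub; lra).
  assert (HGlu : G lb <= G ub) by lra.
  set (cl := fun y => Rmax (G lb) (Rmin y (G ub))).
  assert (Hcl : forall y, G lb <= cl y <= G ub).
  { intro y. unfold cl. split; [apply Rmax_l|].
    apply Rmax_lub; [lra|apply Rmin_r]. }
  assert (Hcl2 : forall y, G lb <= y <= G ub -> cl y = y).
  { intros y Hy. unfold cl. rewrite Rmin_left by lra. rewrite Rmax_right by lra. reflexivity. }
  assert (HGcont : forall x, lb <= x <= ub -> continuity_pt G x).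
  { intros x Hx. apply (deriv_cont G x (/ F x)). apply HG. apply (Hconv lb ub); auto. }
  set (g := fun y => proj1_sig (f_interv_is_interv G lb ub (cl y) Hlbub (Hcl y) HGcont)).
  assert (Hg : forall y, lb <= g y <= ub /\ G (g y) = cl y).
  { intro y. unfold g. destruct (f_interv_is_interv G lb ub (cl y) Hlbub (Hcl y) HGcont) as [z Hz].
    exact Hz. }
  assert (Hgb : forall y, Rabs (g y - x0) < r).
  { intro y. apply (Hconv lb ub); auto. apply Hg. }
  assert (HGg : forall y, G lb <= y <= G ub -> G (g y) = y).
  { intros y Hy. rewrite (proj2 (Hg y)). auto. }
  assert (Hglb : g (G lb) = lb) by (apply Ginj; auto; apply HGg; lra).
  assert (Hgub : g (G ub) = ub) by (apply Ginj; auto; apply HGg; lra).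
  assert (Hgd : forall t, - eps < t < eps -> derivable_pt_lim g t (F (g t))).
  { intros t Ht.
    assert (Prf : forall a, g (G lb) <= a <= g (G ub) -> derivable_pt G a).
    { intros a Ha. exists (/ F a). apply HG. rewrite Hglb, Hgub in Ha. apply (Hconv lb ub); auto. }
    assert (Prg : continuity_pt g t).
    { apply (continuity_pt_recip_interv G g lb ub Hlbub).
      - intros a b Ha Hab Hb. apply Ginc; auto; apply (Hconv lb ub); auto; lra.
      - intros y Hy1 Hy2. unfold comp, id. apply HGg; lra.
      - intros y Hy1 Hy2. apply Hg.
      - exact HGcont.
      - lra. }
    assert (Prg_incr : g (G lb) <= g t <= g (G ub)) by (rewrite Hglb, Hgub; apply Hg).
    assert (Hcomp : forall y, G lb <= y <= G ub -> comp G g y = id y).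
    { intros y Hy. unfold comp, id. apply HGg; lra. }
    assert (Hder : derive_pt G (g t) (Prf (g t) Prg_incr) = / F (g t)).
    { apply derive_pt_eq_0. apply HG. auto. }
    assert (HFgt := HFb (g t) (Hgb t)).
    pose proof (derivable_pt_lim_recip_interv G g (G lb) (G ub) t Prf Prg ltac:(lra) ltac:(lra)
      Prg_incr Hcomp) as H.
    rewrite Hder in H. replace (F (g t)) with (1 / / F (g t)) by (field; lra).
    apply H. apply Rinv_neq_0_compat. lra. }
  assert (Hg0 : g 0 = x0).
  { apply Ginj; auto. rewrite HG0. apply HGg. lra. }
  exists eps. split; auto. exists g. split.
  { split; [lra|split]; auto. }
  intros d y Hd [_ [Hy0 Hyd]] t Ht.
  assert (Hys : forall s, - d < s < d -> Rabs (y s - x0) < r).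
  { apply (stay y (fun s => F (y s)) x0 d r (3 * F0 / 2)); auto.
    - lra.
    - assert (3 * F0 / 2 * eps = r / 2) by (unfold eps; field; lra). nra.
    - intros s Hs Hys. specialize (HFb (y s) Hys). rewrite Rabs_right by lra. lra. }
  assert (Hh : forall s, - d < s < d -> derivable_pt_lim (fun s => G (y s) - s) s 0).
  { intros s Hs.
    replace 0 with (/ F (y s) * F (y s) - 1).
    2:{ specialize (HFb (y s) (Hys s Hs)). field. lra. }
    apply derivable_pt_lim_minus; [|apply derivable_pt_lim_id].
    apply (derivable_pt_lim_comp y G s). apply Hyd; auto. apply HG. auto. }
  pose proof (const_deriv _ d Hh t Ht) as Hc. simpl in Hc. rewrite Hy0, HG0 in Hc.
  apply Ginj; auto. rewrite HGg by lra. lra.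
Qed.

Theorem corollary4p4 (F : R -> R) (x0 : R) :
  continuous_near F x0 -> point_Lipschitz F x0 ->
  exists eps : R, 0 < eps /\
  exists x : R -> R, ivp_solution F x0 (- eps) eps x /\
  forall (d : R) (y : R -> R), 0 < d <= eps -> ivp_solution F x0 (- d) d y ->
    forall t : R, - d < t < d -> y t = x t.
Proof.
  intros Hc HL.
  destruct (Rtotal_order (F x0) 0) as [Hn|[Hz|Hp]].
  - assert (Hc' : continuous_near (fun x => - F x) x0).
    { destruct Hc as [r [Hr Hc]]. exists r. split; auto. intros x Hx.
      apply continuity_pt_opp. auto. }
    destruct (case_pos (fun x => - F x) x0 Hc' ltac:(lra)) as [eps [Heps [x [[_ [Hx0 Hxd]] Hu]]]].
    exists eps. split; auto. exists (fun t => x (- t)). split.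
    + split; [lra|split]. { rewrite Ropp_0; auto. }
      intros t Ht. replace (F (x (- t))) with (- - F (x (- t))) by ring.
      apply rev_deriv. apply Hxd. lra.
    + intros d y Hd [_ [Hy0 Hyd]] t Ht.
      replace (y t) with ((fun s => y (- s)) (- t)) by (simpl; f_equal; ring).
      apply (Hu d (fun s => y (- s)) Hd).
      * split; [lra|split]. { rewrite Ropp_0; auto. }
        intros s Hs. apply rev_deriv. apply Hyd. lra.
      * lra.
  - apply case_zero; auto.
  - apply case_pos; auto.
Qed.
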